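(* If $f\in\mathcal P_s$ and $g\in\mathcal P_r$, then $\{f,g\}\in\mathcal P_{r+s-2}$, and $$ \|\{f,g\}\|_+\le 2^4\,\Omega\,r\,s\,\min(r,s)\,\|f\|_+\|g\|_+ , $$ where $\Omega=\sqrt{2K(m_1+m_2)/(m_1m_2)}$.
   Context: Normal modes of a diatomic chain of $N$ cells with masses $m_1>m_2>0$ and harmonic constant $K>0$: let $\mathcal K_N=\{\lfloor-N/2\rfloor+1,\dots,\lfloor N/2\rfloor\}$; for $k\in\mathcal K_N$, $\kappa=2\pi k/N$, $\Delta_k=m_1^2+m_2^2+2m_1m_2\cos\kappa$, $\omega_k^\pm=\big(K\frac{m_1+m_2\pm\sqrt{\Delta_k}}{m_1m_2}\big)^{1/2}$, $\Omega=\omega_0^+$. The complex normal-mode coordinates $\hat q_k^l,\hat p_k^l$ ($k\in\mathcal K_N$, $l=\pm$) are canonical, $\{\hat q_k^l,\hat p_{k'}^{l'}\}=\delta_{k,k'}\delta_{l,l'}$, with $\hat q^l_{-k}=\overline{\hat q^l_k}$, $\hat p^l_{-k}=\overline{\hat p^l_k}$ (indices $k$ taken mod $N$ in $\mathcal K_N$). Polynomial classes. Put $\xi_k^l=(\hat p_k^l+i\omega_k^l\hat q_{-k}^l)/\sqrt2$, $\eta_k^l=(\hat p_{-k}^l-i\omega_k^l\hat q_k^l)/\sqrt2$, so that $\{\xi_k^l,\eta_{k'}^{l'}\}=i\omega_k^l\delta_{k,k'}\delta_{l,l'}$. For $\sigma\in\{\pm1\}^s$, $k\in\mathcal K_N^s$,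 $l\in\{+,-\}^s$ let $\Xi^s_{\sigma,k,l}=\prod_{j=1}^s(\xi^{l_j}_{k_j})^{(1+\sigma_j)/2}(\eta^{l_j}_{k_j})^{(1-\sigma_j)/2}$. Let $\mathcal I_s$ be the set of tuples $(\sigma,\tilde\tau,k,l,n)$ with $\sigma,\tilde\tau\in\{\pm1\}^s$, $k\in\mathcal K_N^s$, $l\in\{+,-\}^s$, $n\in\mathbb Z$ with $\lfloor-(s-1)/2\rfloor\le n\le\lfloor(s-1)/2\rfloor$, and write $\delta^n_j=\delta_{j,nN}$. $\mathcal P_s$ is the space of functions of the form $f=N^{-(s-2)/2}\sum_{(\sigma,\tilde\tau,k,l,n)\in\mathcal I_s}f_{\sigma,\tilde\tau,l,n}\big(\tfrac{k_1}N,\dots,\tfrac{k_s}N\big)\,\Xi^s_{\sigma,k,l}\,\delta^n_{\tilde\tau\cdot k}$ with continuous coefficient functions $f_{\sigma,\tilde\tau,l,n}:[-1,1]^s\to\mathbb C$, normed by $\|f\|_+=\max_{(\sigma,\tilde\tau,k,l,n)\in\mathcal I_s}\big|f_{\sigma,\tilde\tau,l,n}(k_1/N,\dots,k_s/N)\big|\,\delta^n_{\tilde\tau\cdot k}$. *)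

(* Defs.v *)
From HB Require Import structures.
From mathcomp Require Import all_boot all_order all_algebra.
Set Implicit Arguments. Unset Strict Implicit. Unset Printing Implicit Defensive.
Import Order.TTheory GRing.Theory Num.Theory.
Local Open Scope ring_scope.

Section DiatomicChain.
Variable C : numClosedFieldType.
Variable N : nat.
Variables m1 m2 K : C.

(* K_N = {floor(-N/2)+1, ..., floor(N/2)} is enumerated by i : 'I_N via
   k = i - floor((N-1)/2). *)
Definition kval (i : 'I_N) : int := (i : nat)%:Z - ((N.-1)./2)%:Z.

(* e^{2 pi i/N}: N.-root (-1) is e^{i pi/N} (minimal nonnegative argument). *)
Definition zN : C := (N.-root (-1)) ^+ 2.
(* cos(2 pi k / N) = Re (e^{2 pi i k/N}) *)
Definition cosk (k : int) : C := 'Re (zN ^ k).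
Definition Delta (k : int) : C := m1 ^+ 2 + m2 ^+ 2 + 2 * m1 * m2 * cosk k.
(* omega_k^l, l = true for "+", false for "-" *)
Definition omega (k : int) (l : bool) : C :=
  sqrtC (K * (m1 + m2 + (if l then 1 else -1) * sqrtC (Delta k)) / (m1 * m2)).
Definition Omega : C := sqrtC (2 * K * (m1 + m2) / (m1 * m2)).

(* variables: (k, l, b) stands for xi_k^l if b = true, eta_k^l if b = false *)
Definition var := ('I_N * bool * bool)%type.

Definition pb (a b : var) : C :=
  let: (ka, la, xa) := a in let: (kb, lb, xb) := b in
  if (ka == kb) && (la == lb) then
    (if xa && ~~ xb then 'i * omega (kval ka) la
     else if ~~ xa && xb then - ('i * omega (kval ka) la) else 0)
  else 0.

Definition mono_val s (m : 'I_s -> var) (x : var -> C) : C := \prod_(j < s) x (m j).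

(* Poisson bracket of two monomials (Leibniz rule), evaluated at x *)
Definition mono_br s r (m : 'I_s -> var) (m' : 'I_r -> var) (x : var -> C) : C :=
  \sum_(i < s) \sum_(j < r)
     pb (m i) (m' j) * (\prod_(i' < s | i' != i) x (m i'))
                     * (\prod_(j' < r | j' != j) x (m' j')).

(* coefficient functions f_{sigma, tau, l, n} : [-1,1]^s -> C;
   sigma_j = +1 <-> true, tau_j = +1 <-> true, l_j = + <-> true *)
Definition coefT s :=
  {ffun 'I_s -> bool} -> {ffun 'I_s -> bool} -> {ffun 'I_s -> bool} -> int ->
  ('I_s -> C) -> C.

Definition sgn (b : bool) : int := if b then 1 else -1.
Definition tdot s (t : {ffun 'I_s -> bool}) (k : {ffun 'I_s -> 'I_N}) : int :=
  \sum_(j < s) sgn (t j) * kval (k j).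
(* floor(-(s-1)/2) <= n <= floor((s-1)/2)  <->  -s <= 2n <= s-1 *)
Definition nrange s (n : int) : bool := (- (s%:Z) <= n *+ 2) && (n *+ 2 <= s%:Z - 1).
Definition nlist s : seq int := [seq (i%:Z - s%:Z) | i <- iota 0 (2 * s).+1].
(* (sigma, tau, k, l, n) in I_s together with delta^n_{tau.k} = 1 *)
Definition adm s t (k : {ffun 'I_s -> 'I_N}) (n : int) : bool :=
  nrange s n && (tdot t k == n * N%:Z).

Definition monoOf s (sg : {ffun 'I_s -> bool}) (k : {ffun 'I_s -> 'I_N})
  (l : {ffun 'I_s -> bool}) : 'I_s -> var := fun j => (k j, l j, sg j).
Definition kpt s (k : {ffun 'I_s -> 'I_N}) : 'I_s -> C :=
  fun j => (kval (k j))%:~R / N%:R.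
Definition scaleN s : C := (sqrtC N%:R) ^ (2%:Z - s%:Z).

Definition Pval s (f : coefT s) (x : var -> C) : C :=
  scaleN s *
  \sum_(sg : {ffun 'I_s -> bool}) \sum_(t : {ffun 'I_s -> bool})
  \sum_(k : {ffun 'I_s -> 'I_N}) \sum_(l : {ffun 'I_s -> bool})
  \sum_(n <- nlist s | adm t k n)
     f sg t l n (kpt k) * mono_val (monoOf sg k l) x.

Definition Pbr s r (f : coefT s) (g : coefT r) (x : var -> C) : C :=
  scaleN s * scaleN r *
  \sum_(sg : {ffun 'I_s -> bool}) \sum_(t : {ffun 'I_s -> bool})
  \sum_(k : {ffun 'I_s -> 'I_N}) \sum_(l : {ffun 'I_s -> bool})
  \sum_(n <- nlist s | adm t k n)
  \sum_(sg' : {ffun 'I_r -> bool}) \sum_(t' : {ffun 'I_r -> bool})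
  \sum_(k' : {ffun 'I_r -> 'I_N}) \sum_(l' : {ffun 'I_r -> bool})
  \sum_(n' <- nlist r | adm t' k' n')
     f sg t l n (kpt k) * g sg' t' l' n' (kpt k')
       * mono_br (monoOf sg k l) (monoOf sg' k' l') x.

Definition pnorm s (f : coefT s) : C :=
  \big[Num.max/0]_(sg : {ffun 'I_s -> bool}) \big[Num.max/0]_(t : {ffun 'I_s -> bool})
  \big[Num.max/0]_(k : {ffun 'I_s -> 'I_N}) \big[Num.max/0]_(l : {ffun 'I_s -> bool})
  \big[Num.max/0]_(n <- nlist s | adm t k n) `|f sg t l n (kpt k)|.

Definition in_box s (x : 'I_s -> C) : Prop :=
  forall j, x j \is Num.real /\ `|x j| <= 1.
Definition cont_box s (F : ('I_s -> C) -> C) : Prop :=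
  forall x, in_box x -> forall e : C, 0 < e ->
    exists2 d : C, 0 < d & forall y, in_box y -> (forall j, `|y j - x j| < d) ->
      `|F y - F x| < e.
Definition is_coef s (f : coefT s) : Prop :=
  forall sg t l n, nrange s n -> cont_box (f sg t l n).

End DiatomicChain.

(* Main.v *)
Require Import Defs.
From HB Require Import structures.
From mathcomp Require Import all_boot all_order all_algebra ring zify.
Set Implicit Arguments. Unset Strict Implicit. Unset Printing Implicit Defensive.
Import Order.TTheory GRing.Theory Num.Theory.
Local Open Scope ring_scope.

Section Analytic.
Variable C : numClosedFieldType.
Variable N : nat.
Variables m1 m2 K : C.
Hypothesis N0 : (0 < N)%N.
Hypothesis m2p : 0 < m2.
Hypothesis m12 : m2 < m1.
Hypothesis Kp : 0 < K.

Lemma norm_zN : `|zN C N| = 1.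
Proof. by rewrite /zN normrX norm_rootC normrN1 rootC1 // expr1n. Qed.

Lemma norm_zNk (k : int) : `|zN C N ^ k| = 1.
Proof.
case: k => n.
  by rewrite /= normrX norm_zN expr1n.
by rewrite /exprz normfV normrX norm_zN expr1n invr1.
Qed.

Lemma cosk_real k : cosk C N k \is Num.real.
Proof. exact: Creal_Re. Qed.

Lemma cosk_bnd k : -1 <= cosk C N k <= 1.
Proof.
rewrite -real_ler_norml ?cosk_real //.
by rewrite -(norm_zNk k) (leif_normC_Re_Creal (zN C N ^ k)).
Qed.

Lemma m1p : 0 < m1. Proof. exact: lt_trans m12. Qed.

Lemma mm_ge0 : 0 <= 2 * m1 * m2.
Proof. by apply: mulr_ge0; [apply: mulr_ge0|]; rewrite ?ltW ?m1p. Qed.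
Lemma s_ge0 : 0 <= m1 + m2.
Proof. by apply: addr_ge0; rewrite ltW ?m1p. Qed.

Lemma Delta_lo k : 0 <= Delta N m1 m2 k.
Proof.
have [lo hi] := andP (cosk_bnd k).
have e : Delta N m1 m2 k = (m1 - m2) ^+ 2 + 2 * m1 * m2 * (1 + cosk C N k).
  by rewrite /Delta; ring.
rewrite e; apply: addr_ge0.
  by apply: real_exprn_even_ge0 => //; rewrite rpredB // ger0_real // ltW ?m1p.
apply: mulr_ge0; first exact: mm_ge0.
by rewrite -lerBlDl sub0r.
Qed.

Lemma Delta_hi k : Delta N m1 m2 k <= (m1 + m2) ^+ 2.
Proof.
have [lo hi] := andP (cosk_bnd k).
have e : (m1 + m2) ^+ 2 - Delta N m1 m2 k = 2 * m1 * m2 * (1 - cosk C N k).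
  by rewrite /Delta; ring.
rewrite -subr_ge0 e; apply: mulr_ge0.
  exact: mm_ge0.
by rewrite subr_ge0.
Qed.

Lemma sqD_bnd k : 0 <= sqrtC (Delta N m1 m2 k) <= m1 + m2.
Proof.
have s0 := s_ge0.
rewrite sqrtC_ge0 Delta_lo /= -{1}(sqrCK s0) ler_sqrtC ?Delta_hi //.
  by rewrite qualifE /= Delta_lo.
by rewrite qualifE /=; apply: real_exprn_even_ge0; rewrite // ger0_real.
Qed.

Lemma omega_bnd k l : 0 <= omega N m1 m2 K k l <= Omega m1 m2 K.
Proof.
have [lo hi] := andP (sqD_bnd k).
have mp : 0 < m1 * m2 by rewrite mulr_gt0 ?m1p.
set D := sqrtC _ in lo hi.
have a0 : 0 <= K * (m1 + m2 + (if l then 1 else -1) * D) / (m1 * m2).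
  apply: divr_ge0; last exact: ltW.
  apply: mulr_ge0; first exact: ltW.
  by case: l; rewrite ?mul1r ?mulN1r ?subr_ge0 //; apply: addr_ge0 => //; exact: s_ge0.
have a1 : K * (m1 + m2 + (if l then 1 else -1) * D) / (m1 * m2) <= 2 * K * (m1 + m2) / (m1 * m2).
  rewrite ler_pM2r ?invr_gt0 // -mulrA mulrCA ler_pM2l // mulr_natl mulr2n lerD2l.
  by clear a0; case: l; rewrite ?mul1r ?mulN1r // (le_trans _ s_ge0) // oppr_le0.
rewrite /omega sqrtC_ge0 a0 /Omega ler_sqrtC // qualifE //=.
exact: le_trans a1.
Qed.

Lemma omega0m : omega N m1 m2 K 0 false = 0.
Proof.
rewrite /omega /Delta /cosk expr0z.
have -> : 'Re (1 : C) = 1 by apply/(Creal_ReP _ _); rewrite real1.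
have s0 := s_ge0.
have -> : m1 ^+ 2 + m2 ^+ 2 + 2 * m1 * m2 * 1 = (m1 + m2) ^+ 2 by ring.
by rewrite sqrCK // mulN1r subrr mulr0 mul0r sqrtC0.
Qed.

Lemma Omega_ge0 : 0 <= Omega m1 m2 K.
Proof.
rewrite /Omega sqrtC_ge0; apply: divr_ge0; last by apply: ltW; rewrite mulr_gt0 ?m1p.
by apply: mulr_ge0; [apply: mulr_ge0|exact: s_ge0]; rewrite // ltW.
Qed.

Lemma pb_bnd (a b : var N) : `|pb m1 m2 K a b| <= Omega m1 m2 K.
Proof.
case: a b => [[ka la] xa] [[kb lb] xb] /=.
have [o0 o1] := andP (omega_bnd (kval ka) la).
case: ifP => _; last by rewrite normr0 Omega_ge0.
case: ifP => _; first by rewrite normrM normCi mul1r ger0_norm.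
case: ifP => _; last by rewrite normr0 Omega_ge0.
by rewrite normrN normrM normCi mul1r ger0_norm.
Qed.
End Analytic.
Section BMax.
Variable C : numClosedFieldType.

Lemma max_ge0 (x y : C) : 0 <= x -> 0 <= y -> 0 <= Num.max x y.
Proof.
move=> hx hy; rewrite comparable_le_max ?hx //.
by apply: real_comparable; apply: ger0_real.
Qed.

Lemma bmax_ge0 (I : Type) (s : seq I) (P : pred I) (F : I -> C) :
  (forall i, P i -> 0 <= F i) -> 0 <= \big[Num.max/0]_(i <- s | P i) F i.
Proof.
move=> h; elim: s => [|a s IH]; first by rewrite big_nil.
rewrite big_cons; case: ifP => // Pa; exact: max_ge0 (h _ Pa) IH.
Qed.

Lemma le_bmax (I : eqType) (s : seq I) (P : pred I) (F : I -> C) x :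
  (forall i, P i -> 0 <= F i) -> x \in s -> P x ->
  F x <= \big[Num.max/0]_(i <- s | P i) F i.
Proof.
move=> h; elim: s => [|a s IH] //; rewrite inE => /orP [/eqP -> | xs] Px.
  rewrite big_cons Px comparable_le_max ?lexx //.
  by apply: real_comparable; apply: ger0_real; [exact: h | exact: bmax_ge0].
rewrite big_cons; case: ifP => Pa; last exact: IH.
rewrite comparable_le_max ?IH ?orbT //.
by apply: real_comparable; apply: ger0_real; [exact: h | exact: bmax_ge0].
Qed.

Lemma bmax_le2 (I : eqType) (s : seq I) (P : pred I) (F : I -> C) B :
  0 <= B -> (forall i, i \in s -> P i -> 0 <= F i <= B) ->
  0 <= \big[Num.max/0]_(i <- s | P i) F i <= B.
Proof.
move=> hB; elim: s => [|a s IH] h; first by rewrite big_nil lexx.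
have h' : forall i, i \in s -> P i -> 0 <= F i <= B.
  by move=> i ins; apply: h; rewrite inE ins orbT.
have [g1 g2] := andP (IH h').
rewrite big_cons; case: ifP => Pa; last by rewrite g1 g2.
have [h1 h2] := andP (h _ (mem_head _ _) Pa).
rewrite max_ge0 //= comparable_ge_max ?h2 ?g2 //.
by apply: real_comparable; apply: ger0_real.
Qed.

Lemma bmax_le (I : eqType) (s : seq I) (P : pred I) (F : I -> C) B :
  0 <= B -> (forall i, i \in s -> P i -> 0 <= F i <= B) ->
  \big[Num.max/0]_(i <- s | P i) F i <= B.
Proof. by move=> hB h; have /andP[] := bmax_le2 hB h. Qed.
End BMax.

Section Comb.
Variables (s r : nat).
Hypothesis s1 : (0 < s)%N.
Hypothesis r1 : (0 < r)%N.

Definition combN (X : Type) (i : 'I_s) (j : 'I_r) (U : 'I_s -> X) (V : 'I_r -> X) (a : nat) : X :=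
  if (a < s.-1)%N then U (insubd i (bump i a)) else V (insubd j (bump j (a - s.-1))).

Lemma big_skip (R : Type) (idx : R) (op : Monoid.com_law idx) n (i : 'I_n) (U : 'I_n -> R) :
  \big[op/idx]_(i' < n | i' != i) U i' =
  \big[op/idx]_(0 <= a < n.-1) U (insubd i (bump i a)).
Proof.
rewrite big_mkcond (bigD1_ord i) //= eqxx Monoid.simpm /= big_mkord.
apply: eq_bigr => a _; rewrite eq_sym neq_lift; congr U.
by apply: val_inj; rewrite /= val_insubd /= -[bump _ _]/(val (lift i a)) ltn_ord.
Qed.

Lemma big_comb (R : Type) (idx : R) (op : Monoid.com_law idx) (i : 'I_s) (j : 'I_r)
   (U : 'I_s -> R) (V : 'I_r -> R) :
  \big[op/idx]_(a < r + s - 2) combN i j U V a =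
  op (\big[op/idx]_(i' < s | i' != i) U i') (\big[op/idx]_(j' < r | j' != j) V j').
Proof.
rewrite !big_skip -(big_mkord xpredT (combN i j U V)).
have e : (r + s - 2 = s.-1 + r.-1)%N by case: s s1 => // s' _; case: r r1 => // r' _; rewrite addnC addSn addnS /= subn2 -pred_Sn.
rewrite e (big_cat_nat _ (leq_addr _ _)) //=; congr (op _ _).
  by apply: eq_big_nat => a /andP[_ ha]; rewrite /combN ha.
rewrite -{1}[s.-1]add0n big_addn addKn; apply: eq_big_nat => a _.
by rewrite /combN ltnNge leq_addl /= addnK.
Qed.
End Comb.
Section LB.
Variable C : numClosedFieldType.
Variable d : nat.
Definition dist (x y : 'I_d -> C) := \sum_j `|y j - x j|.
Definition LB (F : ('I_d -> C) -> C) := exists B L : C, [/\ 0 <= B, 0 <= L,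
  (forall x, in_box x -> `|F x| <= B) &
  (forall x y, in_box x -> in_box y -> `|F y - F x| <= L * dist x y)].

Lemma dist_ge0 x y : 0 <= dist x y.
Proof. by apply: sumr_ge0 => j _. Qed.

Lemma LB_const c : LB (fun _ => c).
Proof.
exists `|c|, 0; split => //.
by move=> *; rewrite subrr normr0 mul0r.
Qed.

Lemma LB_coord a : LB (fun x => x a).
Proof.
exists 1, 1; split => //; first by move=> x /(_ a) [].
move=> x y _ _; rewrite mul1r /dist (bigD1 a) //= lerDl.
by apply: sumr_ge0.
Qed.

Lemma LB_add F G : LB F -> LB G -> LB (fun x => F x + G x).
Proof.
move=> [B1 [L1 [b1 l1 h1 k1]]] [B2 [L2 [b2 l2 h2 k2]]].
exists (B1 + B2), (L1 + L2); split; first exact: addr_ge0.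
- exact: addr_ge0.
- by move=> x bx; rewrite (le_trans (ler_normD _ _)) // lerD ?h1 ?h2.
move=> x y bx by_; rewrite opprD addrACA (le_trans (ler_normD _ _)) // mulrDl.
by rewrite lerD ?k1 ?k2.
Qed.

Lemma LB_mul F G : LB F -> LB G -> LB (fun x => F x * G x).
Proof.
move=> [B1 [L1 [b1 l1 h1 k1]]] [B2 [L2 [b2 l2 h2 k2]]].
exists (B1 * B2), (B1 * L2 + B2 * L1); split.
- exact: mulr_ge0.
- by apply: addr_ge0; apply: mulr_ge0.
- by move=> x bx; rewrite normrM ler_pM ?h1 ?h2.
move=> x y bx by_.
have -> : F y * G y - F x * G x = F y * (G y - G x) + G x * (F y - F x) by ring.
rewrite (le_trans (ler_normD _ _)) // mulrDl !normrM -!mulrA.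
by rewrite lerD // ler_pM ?k1 ?k2 ?h1 ?h2.
Qed.

Lemma LB_ext F G : (forall x, F x = G x) -> LB F -> LB G.
Proof.
move=> e [B [L [b l h k]]]; exists B, L; split => // => [x|x y] *; rewrite -?e; auto.
Qed.

Lemma LB_sum (I : Type) (s : seq I) (P : pred I) (G : I -> ('I_d -> C) -> C) :
  (forall i, LB (G i)) -> LB (fun x => \sum_(i <- s | P i) G i x).
Proof.
move=> h; elim: s => [|a s IH].
  by apply: (LB_ext (F := fun _ => 0)); [move=> x; rewrite big_nil | exact: LB_const].
apply: (LB_ext (F := fun x => (if P a then G a x else 0) + \sum_(i <- s | P i) G i x)).
  by move=> x; rewrite big_cons; case: (P a); rewrite ?add0r.
apply: LB_add => //; case: (P a) => //; exact: LB_const.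
Qed.

Lemma LB_prod (I : Type) (s : seq I) (P : pred I) (G : I -> ('I_d -> C) -> C) :
  (forall i, LB (G i)) -> LB (fun x => \prod_(i <- s | P i) G i x).
Proof.
move=> h; elim: s => [|a s IH].
  by apply: (LB_ext (F := fun _ => 1)); [move=> x; rewrite big_nil | exact: LB_const].
apply: (LB_ext (F := fun x => (if P a then G a x else 1) * \prod_(i <- s | P i) G i x)).
  by move=> x; rewrite big_cons; case: (P a); rewrite ?mul1r.
apply: LB_mul => //; case: (P a) => //; exact: LB_const.
Qed.

Lemma LB_cont F : LB F -> cont_box F.
Proof.
move=> [B [L [b l h k]]] x bx e e0.
have D0 : 0 < L * d%:R + 1 by apply: ltr_wpDl => //; apply: mulr_ge0.
exists (e / (L * d%:R + 1)); first by apply: divr_gt0.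
move=> y by_ hy; apply: (le_lt_trans (k _ _ bx by_)).
have hd : dist x y <= d%:R * (e / (L * d%:R + 1)).
  apply: (@le_trans _ _ (\sum_(j < d) (e / (L * d%:R + 1)))).
    by apply: ler_sum => j _; apply: ltW; apply: hy.
  by rewrite sumr_const card_ord mulr_natl.
apply: (le_lt_trans (ler_wpM2l l hd)).
have -> : L * (d%:R * (e / (L * d%:R + 1))) = (L * d%:R / (L * d%:R + 1)) * e by ring.
rewrite gtr_pMl // ltr_pdivrMr // mul1r.
by rewrite ltrDl ltr01.
Qed.
End LB.
Section Idx.
Variable C : numClosedFieldType.
Variable N : nat.

Definition FI n : finType := (((({ffun 'I_n -> bool} * {ffun 'I_n -> bool}) * {ffun 'I_n -> 'I_N})
   * {ffun 'I_n -> bool}) * 'I_(2 * n).+1)%type.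
Definition aSg n (a : FI n) := a.1.1.1.1.
Definition aT n (a : FI n) := a.1.1.1.2.
Definition aK n (a : FI n) := a.1.1.2.
Definition aL n (a : FI n) := a.1.2.
Definition aQ n (a : FI n) := a.2.
Definition nv n (q : 'I_(2 * n).+1) : int := (q : nat)%:Z - n%:Z.
Definition admI n (a : FI n) := adm (aT a) (aK a) (nv (aQ a)).
Definition mOf n (a : FI n) := monoOf (aSg a) (aK a) (aL a).
Definition fval n (f : coefT C n) (a : FI n) :=
  f (aSg a) (aT a) (aL a) (nv (aQ a)) (kpt C (aK a)).

Lemma sum_nlist n (P : pred int) (G : int -> C) :
  \sum_(x <- nlist n | P x) G x = \sum_(q < (2 * n).+1 | P (nv q)) G (nv q).
Proof.
rewrite /nlist big_map /=.
rewrite -(big_mkord (fun q : nat => P (q%:Z - n%:Z)) (fun q : nat => G (q%:Z - n%:Z))).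
by rewrite /index_iota subn0.
Qed.

Lemma sum_pair (I J : finType) (H : I * J -> C) :
  \sum_p H p = \sum_i \sum_j H (i, j).
Proof. by rewrite pair_bigA; apply: eq_bigr => -[]. Qed.

Lemma sum5 n (G : {ffun 'I_n -> bool} -> {ffun 'I_n -> bool} -> {ffun 'I_n -> 'I_N} ->
  {ffun 'I_n -> bool} -> int -> C) :
  \sum_sg \sum_t \sum_k \sum_l \sum_(x <- nlist n | adm t k x) G sg t k l x =
  \sum_(a : FI n | admI a) G (aSg a) (aT a) (aK a) (aL a) (nv (aQ a)).
Proof.
rewrite [RHS]big_mkcond /= !sum_pair.
apply: eq_bigr => sg _; apply: eq_bigr => t _; apply: eq_bigr => k _; apply: eq_bigr => l _.
by rewrite sum_nlist big_mkcond.
Qed.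
End Idx.

Section PN.
Variable C : numClosedFieldType.
Variable N : nat.

Lemma nv_in n (q : 'I_(2 * n).+1) : nv q \in nlist n.
Proof. by rewrite /nlist; apply: (map_f (fun i : nat => i%:Z - n%:Z)); rewrite mem_iota /= add0n ltn_ord. Qed.

Lemma nlist_nv n x : x \in nlist n -> exists q : 'I_(2 * n).+1, nv q = x.
Proof.
rewrite /nlist => /mapP [i]; rewrite mem_iota add0n => /andP [_ hi] ->.
by exists (Ordinal hi).
Qed.

Lemma pnorm_ge0 n (f : coefT C n) : 0 <= pnorm N f.
Proof. by do 5 (apply: bmax_ge0 => * ). Qed.

Lemma fval_le n (f : coefT C n) (a : FI N n) : admI a -> `|fval f a| <= pnorm N f.
Proof.
move=> ha.
have g0 : forall I (s : seq I) (P : pred I) (F : I -> C), (forall i, P i -> 0 <= F i) ->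
   forall i, true -> 0 <= \big[Num.max/0]_(i <- s | P i) F i.
  by move=> *; apply: bmax_ge0.
apply: (le_trans _ (le_bmax _ (mem_index_enum (aSg a)) _)) => //; last first.
  by move=> *; do 4 (apply: bmax_ge0 => * ).
apply: (le_trans _ (le_bmax _ (mem_index_enum (aT a)) _)) => //; last first.
  by move=> *; do 3 (apply: bmax_ge0 => * ).
apply: (le_trans _ (le_bmax _ (mem_index_enum (aK a)) _)) => //; last first.
  by move=> *; do 2 (apply: bmax_ge0 => * ).
apply: (le_trans _ (le_bmax _ (mem_index_enum (aL a)) _)) => //; last first.
  by move=> *; do 1 (apply: bmax_ge0 => * ).
exact: (le_bmax _ (nv_in (aQ a)) ha).
Qed.

Lemma pnorm_le n (f : coefT C n) B : 0 <= B -> (forall a : FI N n, admI a -> `|fval f a| <= B) ->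
  pnorm N f <= B.
Proof.
move=> hB h.
apply: bmax_le => // sg _ _; rewrite bmax_ge0 //=; last by move=> *; do 3 (apply: bmax_ge0 => * ).
apply: bmax_le => // t _ _; rewrite bmax_ge0 //=; last by move=> *; do 2 (apply: bmax_ge0 => * ).
apply: bmax_le => // k _ _; rewrite bmax_ge0 //=; last by move=> *; do 1 (apply: bmax_ge0 => * ).
apply: bmax_le => // l _ _; rewrite bmax_ge0 //=.
apply: bmax_le => // x hx ax; rewrite normr_ge0 /=.
have [q eq] := nlist_nv hx.
have := h ((((sg, t), k), l), q); rewrite /admI /fval /= eq; exact.
Qed.
End PN.

Lemma arith_eps (bi bj : bool) (nA nB1 nB2 D R S : int) :
  D = R + S - 2 -> 2 <= S -> - R <= nB1 *+ 2 <= R - 1 -> - R <= nB2 *+ 2 <= R - 1 ->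
  (if (sgn bi * nA - sgn bj * nB1) *+ 2 == D then - (sgn bi * nA - sgn bj * nB1) else (sgn bi * nA - sgn bj * nB1)) =
  (if (sgn bi * nA - sgn bj * nB2) *+ 2 == D then - (sgn bi * nA - sgn bj * nB2) else (sgn bi * nA - sgn bj * nB2)) ->
  ((sgn bi * nA - sgn bj * nB1) *+ 2 == D) = ((sgn bi * nA - sgn bj * nB2) *+ 2 == D).
Proof.
move=> hD hS /andP [a1 a2] /andP [b1 b2].
case: bi; case: bj; rewrite /= ?mul1r ?mulN1r;
case: eqP => h3; case: eqP => h4 //=; lia.
Qed.

Lemma arith_eps2 (bi bj : bool) (nB nA1 nA2 D R S : int) :
  D = R + S - 2 -> 2 <= R -> - S <= nA1 *+ 2 <= S - 1 -> - S <= nA2 *+ 2 <= S - 1 ->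
  (if (sgn bi * nA1 - sgn bj * nB) *+ 2 == D then - (sgn bi * nA1 - sgn bj * nB) else (sgn bi * nA1 - sgn bj * nB)) =
  (if (sgn bi * nA2 - sgn bj * nB) *+ 2 == D then - (sgn bi * nA2 - sgn bj * nB) else (sgn bi * nA2 - sgn bj * nB)) ->
  ((sgn bi * nA1 - sgn bj * nB) *+ 2 == D) = ((sgn bi * nA2 - sgn bj * nB) *+ 2 == D).
Proof.
move=> hD hS /andP [a1 a2] /andP [b1 b2].
case: bi; case: bj; rewrite /= ?mul1r ?mulN1r;
case: eqP => h3; case: eqP => h4 //=; lia.
Qed.

Lemma arith_n (e bi bj : bool) (nA nB1 nB2 : int) :
  (if e then - (sgn bi * nA - sgn bj * nB1) else (sgn bi * nA - sgn bj * nB1)) =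
  (if e then - (sgn bi * nA - sgn bj * nB2) else (sgn bi * nA - sgn bj * nB2)) -> nB1 = nB2.
Proof. by case: e; case: bi; case: bj; rewrite /= ?mul1r ?mulN1r => h; lia. Qed.

Lemma arith_n2 (e bi bj : bool) (nB nA1 nA2 : int) :
  (if e then - (sgn bi * nA1 - sgn bj * nB) else (sgn bi * nA1 - sgn bj * nB)) =
  (if e then - (sgn bi * nA2 - sgn bj * nB) else (sgn bi * nA2 - sgn bj * nB)) -> nA1 = nA2.
Proof. by case: e; case: bi; case: bj; rewrite /= ?mul1r ?mulN1r => h; lia. Qed.

Section Main.
Variables (C : numClosedFieldType) (N : nat) (m1 m2 K : C) (r s : nat).
Variables (f : coefT C s) (g : coefT C r).
Hypotheses (m2p : 0 < m2) (m12 : m2 < m1) (Kp : 0 < K) (N0 : (0 < N)%N) (s1 : (1 <= s)%N) (r1 : (1 <= r)%N) (rs3 : (3 <= r + s)%N).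
Local Notation d := (r + s - 2)%N.

Definition TT : finType := ((FI N s * FI N r) * ('I_s * 'I_r))%type.
Definition tA (T : TT) := T.1.1.
Definition tB (T : TT) := T.1.2.
Definition tI (T : TT) := T.2.1.
Definition tJ (T : TT) := T.2.2.

Definition std (T : TT) : int :=
  sgn (aT (tA T) (tI T)) * nv (aQ (tA T)) - sgn (aT (tB T) (tJ T)) * nv (aQ (tB T)).
Definition eps (T : TT) : bool := (std T *+ 2 == d%:Z).
Definition nn (T : TT) : int := if eps T then - std T else std T.

Definition tauU (T : TT) (i' : 'I_s) : bool := (aT (tA T) (tI T) == aT (tA T) i') != eps T.
Definition tauV (T : TT) (j' : 'I_r) : bool := (aT (tB T) (tJ T) == aT (tB T) j') == eps T.

Definition cmb (X : Type) (i : 'I_s) (j : 'I_r) (U : 'I_s -> X) (V : 'I_r -> X) : {ffun 'I_d -> X} :=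
  [ffun a : 'I_d => combN i j U V a].

Definition phi (T : TT) : FI N d :=
  ((((cmb (tI T) (tJ T) (aSg (tA T)) (aSg (tB T)),
      cmb (tI T) (tJ T) (tauU T) (tauV T)),
      cmb (tI T) (tJ T) (aK (tA T)) (aK (tB T))),
      cmb (tI T) (tJ T) (aL (tA T)) (aL (tB T))),
   inord (absz (nn T + d%:Z))).

Definition cT (T : TT) : C :=
  if admI (tA T) && admI (tB T) then
    fval f (tA T) * fval g (tB T) * pb m1 m2 K (mOf (tA T) (tI T)) (mOf (tB T) (tJ T))
  else 0.

Definition monoT (T : TT) (x : var N -> C) : C :=
  (\prod_(i' < s | i' != tI T) x (mOf (tA T) i')) * (\prod_(j' < r | j' != tJ T) x (mOf (tB T) j')).

Definition Hv (G : FI N d) : C := \sum_(T : TT) (if phi T == G then cT T else 0).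

Definition kp (b : 'I_N) : C := (kval b)%:~R / N%:R.
Definition Lag (k : {ffun 'I_d -> 'I_N}) (p : 'I_d -> C) : C :=
  \prod_(a < d) \prod_(b : 'I_N | b != k a) ((p a - kp b) / (kp (k a) - kp b)).

Definition hh : coefT C d := fun sg t l n p =>
  \sum_(k : {ffun 'I_d -> 'I_N}) Lag k p * Hv ((((sg, t), k), l), inord (absz (n + d%:Z))).

Lemma kval_inj : injective (@kval N).
Proof. by move=> b1 b2; rewrite /kval => /addIr [] /val_inj. Qed.

Lemma kp_inj : injective kp.
Proof.
move=> b1 b2; rewrite /kp => /(mulIf _) h; apply: kval_inj; apply/eqP.
rewrite -(eqr_int C); apply/eqP; apply: h.
by rewrite invr_eq0 pnatr_eq0 -lt0n.
Qed.

Lemma Lag_kpt k k' : Lag k (kpt C k') = (k == k')%:R.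
Proof.
rewrite /Lag; case: eqP => [<- | /eqP nk].
  rewrite big1 // => a _; rewrite big1 // => b hb.
  by rewrite /kpt divff // subr_eq0; apply/eqP => /kp_inj /eqP; rewrite eq_sym (negPf hb).
have [a ha] : exists a, k a != k' a.
  by apply/existsP; move: nk; apply: contraR => /existsPn h; apply/eqP/ffunP => a; apply/eqP; move: (h a); rewrite negbK.
rewrite (bigD1 a) //= (bigD1 (k' a)) 1?eq_sym //= /kpt.
by rewrite subrr mul0r !mul0r.
Qed.

Lemma nv_d (q : 'I_(2 * d).+1) : inord (absz (nv q + d%:Z)) = q.
Proof. by apply: val_inj; rewrite /nv subrK /= inordK. Qed.

Lemma hh_kpt sg t l q k : hh sg t l (nv q) (kpt C k) = Hv ((((sg, t), k), l), q).
Proof.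
rewrite /hh (bigD1 k) //= Lag_kpt eqxx mul1r nv_d big1 ?addr0 // => k' hk'.
by rewrite Lag_kpt (negPf hk') mul0r.
Qed.

Lemma hh_coef : is_coef hh.
Proof.
move=> sg t l n _; apply: LB_cont; apply: LB_sum => k.
apply: LB_mul; last exact: LB_const.
apply: LB_prod => a; apply: LB_prod => b.
apply: LB_mul; last exact: LB_const.
by apply: LB_add; [exact: LB_coord | exact: LB_const].
Qed.

Lemma E1 x : Pval hh x = scaleN C N d * \sum_(G : FI N d | admI G) Hv G * mono_val (mOf G) x.
Proof.
rewrite /Pval sum5; congr (_ * _); apply: eq_bigr => G _.
by rewrite hh_kpt; case: G => [[[[? ?] ?] ?] ?].
Qed.

Lemma scale_sr : scaleN C N s * scaleN C N r = scaleN C N d.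
Proof.
rewrite /scaleN -expfzDr; last by rewrite sqrtC_eq0 pnatr_eq0 -lt0n.
congr (_ ^ _); have h : (2 <= r + s)%N by apply: ltnW.
rewrite -(subzn h) PoszD; ring.
Qed.

Lemma E2 x : Pbr m1 m2 K f g x = scaleN C N d * \sum_(T : TT) cT T * monoT T x.
Proof.
rewrite /Pbr -scale_sr sum5; congr (_ * _).
under eq_bigr do rewrite sum5.
rewrite [RHS](sum_pair (I := (FI N s * FI N r)%type)) [RHS](sum_pair (I := FI N s)).
rewrite big_mkcond; apply: eq_bigr => a _; case ha: (admI a); last first.
  by rewrite big1 // => b _; rewrite big1 // => ij _; rewrite /cT /tA /= ha /= mul0r.
rewrite big_mkcond; apply: eq_bigr => b _; case hb: (admI b); last first.
  by rewrite big1 // => ij _; rewrite /cT /tA /tB /= ha hb /= mul0r.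
rewrite (sum_pair (I := 'I_s)) /mono_br mulr_sumr; apply: eq_bigr => i _.
rewrite mulr_sumr; apply: eq_bigr => j _.
rewrite /cT /monoT /tA /tB /tI /tJ /= ha hb /= /fval /mOf.
by rewrite !mulrA.
Qed.

Lemma cmbE X i j (U : 'I_s -> X) V (a : 'I_d) : cmb i j U V a = combN i j U V a.
Proof. by rewrite ffunE. Qed.

Lemma sum_comb (R : nmodType) i j (U : 'I_s -> R) V :
  \sum_(a < d) combN i j U V a = \sum_(i' < s | i' != i) U i' + \sum_(j' < r | j' != j) V j'.
Proof. exact: (big_comb s1 r1 (+%R)). Qed.

Lemma prod_comb (R : comPzSemiRingType) i j (U : 'I_s -> R) V :
  \prod_(a < d) combN i j U V a = \prod_(i' < s | i' != i) U i' * \prod_(j' < r | j' != j) V j'.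
Proof. exact: (big_comb s1 r1 ( *%R)). Qed.

Lemma mono_phi T x : mono_val (mOf (phi T)) x = monoT T x.
Proof.
rewrite /mono_val (eq_bigr (fun a : 'I_d => combN (tI T) (tJ T)
   (fun i' => x (mOf (tA T) i')) (fun j' => x (mOf (tB T) j')) a)).
  by rewrite prod_comb.
move=> a _; rewrite /mOf /monoOf /phi /aSg /aK /aL /= !cmbE /combN.
by case: ifP.
Qed.

Lemma kval_bnd (b : 'I_N) : - (N%:Z) < kval b *+ 2 <= N%:Z.
Proof.
rewrite /kval; have := ltn_ord b; have := odd_double_half N.-1.
case: N N0 b => // N' _ b /= h hb.
have : (b <= N')%N by [].
move: h; set H := N'./2; case: (odd N') => /= h hb2; lia.
Qed.

Lemma sum_bnd n (F : 'I_n -> int) (B : int) :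
  (forall j, - B <= F j *+ 2 <= B) -> - (n%:Z * B) <= (\sum_j F j) *+ 2 <= n%:Z * B.
Proof.
move=> h; rewrite -sumrMnl.
have e : n%:Z * B = \sum_(j < n) B by rewrite sumr_const card_ord -mulr_natl natz.
rewrite e -sumrN; apply/andP; split; apply: ler_sum => j _; by have /andP[] := h j.
Qed.

Lemma tdot_bnd n (t : {ffun 'I_n -> bool}) (k : {ffun 'I_n -> 'I_N}) :
  - (n%:Z * N%:Z) <= tdot t k *+ 2 <= n%:Z * N%:Z.
Proof.
apply: sum_bnd => j; have /andP[h1 h2] := kval_bnd (k j).
case: (t j) => /=; rewrite ?mul1r ?mulN1r; apply/andP; split; lia.
Qed.

Lemma sgnU b c e : sgn ((b == c) != e) = sgn (~~ e) * sgn b * sgn c.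
Proof. by case: b; case: c; case: e. Qed.
Lemma sgnV b c e : sgn ((b == c) == e) = sgn e * sgn b * sgn c.
Proof. by case: b; case: c; case: e. Qed.

Lemma tdot_split n (t : {ffun 'I_n -> bool}) (k : {ffun 'I_n -> 'I_N}) i :
  tdot t k = sgn (t i) * kval (k i) + \sum_(i' < n | i' != i) sgn (t i') * kval (k i').
Proof. by rewrite /tdot (bigD1 i). Qed.

Lemma tdot_phi T : admI (tA T) -> admI (tB T) -> aK (tA T) (tI T) = aK (tB T) (tJ T) ->
  tdot (aT (phi T)) (aK (phi T)) = nn T * N%:Z.
Proof.
move=> /andP [_ /eqP hA] /andP [_ /eqP hB] hk.
rewrite (tdot_split _ _ (tI T)) in hA; rewrite (tdot_split _ _ (tJ T)) in hB.
rewrite /tdot (eq_bigr (fun a : 'I_d => combN (tI T) (tJ T)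
   (fun i' => sgn (tauU T i') * kval (aK (tA T) i')) (fun j' => sgn (tauV T j') * kval (aK (tB T) j')) a)); last first.
  by move=> a _; rewrite /phi /aT /aK /= !cmbE /combN; case: ifP.
rewrite sum_comb.
rewrite (eq_bigr (fun i' => sgn (~~ eps T) * sgn (aT (tA T) (tI T)) * (sgn (aT (tA T) i') * kval (aK (tA T) i')))); last first.
  by move=> i' _; rewrite /tauU sgnU !mulrA.
rewrite [X in _ + X](eq_bigr (fun j' => sgn (eps T) * sgn (aT (tB T) (tJ T)) * (sgn (aT (tB T) j') * kval (aK (tB T) j')))); last first.
  by move=> j' _; rewrite /tauV sgnV !mulrA.
rewrite -!mulr_sumr.
move: hA hB; rewrite hk /nn /std.
set SA := \sum_(i' < s | _) _; set SB := \sum_(j' < r | _) _.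
move=> hA hB.
have eA : SA = nv (aQ (tA T)) * N%:Z - sgn (aT (tA T) (tI T)) * kval (aK (tB T) (tJ T)) by rewrite -hA; ring.
have eB : SB = nv (aQ (tB T)) * N%:Z - sgn (aT (tB T) (tJ T)) * kval (aK (tB T) (tJ T)) by rewrite -hB; ring.
rewrite eA eB; case: (eps T); case: (aT (tA T) (tI T)); case: (aT (tB T) (tJ T)); rewrite /=; ring.
Qed.
Lemma d_ge1 : (1 <= d)%N.
Proof. by move: rs3; lia. Qed.

Lemma nn_bnd T : admI (tA T) -> admI (tB T) -> aK (tA T) (tI T) = aK (tB T) (tJ T) ->
  - (d%:Z) <= nn T *+ 2 <= d%:Z.
Proof.
move=> hA hB hk; have := tdot_bnd (aT (phi T)) (aK (phi T)); rewrite tdot_phi //.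
have hN : (0 < N%:Z)%R by rewrite ltz_nat.
move=> /andP [h1 h2]; apply/andP; split; nia.
Qed.

Lemma nv_phi T : admI (tA T) -> admI (tB T) -> aK (tA T) (tI T) = aK (tB T) (tJ T) ->
  nv (aQ (phi T)) = nn T.
Proof.
move=> hA hB hk; have /andP [h1 h2] := nn_bnd hA hB hk.
have h0 : 0 <= nn T + d%:Z by lia.
rewrite /nv /aQ /phi /= inordK; first by rewrite gez0_abs //; ring.
have : (absz (nn T + d%:Z))%:Z <= (2 * d)%N%:Z by rewrite gez0_abs //; lia.
by rewrite lez_nat.
Qed.

Lemma adm_phi T : admI (tA T) -> admI (tB T) -> aK (tA T) (tI T) = aK (tB T) (tJ T) ->
  admI (phi T).
Proof.
move=> hA hB hk; rewrite /admI /adm nv_phi // tdot_phi // eqxx andbT.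
have /andP [h1 h2] := nn_bnd hA hB hk.
have hd := d_ge1.
have hne : nn T *+ 2 != d%:Z.
  rewrite /nn; case he: (eps T); last by move: he; rewrite /eps => ->.
  move: he; rewrite /eps => /eqP he; apply/eqP; lia.
rewrite /nrange; apply/andP; split; first by [].
move: hne => /eqP hne; lia.
Qed.
Lemma pb_nz (a b : var N) : pb m1 m2 K a b != 0 ->
  [/\ a.1.1 = b.1.1, a.1.2 = b.1.2 & a.2 != b.2].
Proof.
case: a b => [[ka la] xa] [[kb lb] xb] /=.
case: ifP => [/andP [/eqP -> /eqP ->] | _]; last by rewrite eqxx.
by case: xa; case: xb; rewrite /= ?eqxx.
Qed.

Lemma cT_nz T : cT T != 0 ->
  [/\ admI (tA T), admI (tB T), aK (tA T) (tI T) = aK (tB T) (tJ T),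
      aL (tA T) (tI T) = aL (tB T) (tJ T) & aSg (tA T) (tI T) != aSg (tB T) (tJ T)].
Proof.
rewrite /cT; case: ifP => [/andP [hA hB] | _]; last by rewrite eqxx.
rewrite mulf_eq0 negb_or => /andP [_ /pb_nz [h1 h2 h3]].
by split.
Qed.

Lemma E3 x : \sum_(G : FI N d | admI G) Hv G * mono_val (mOf G) x = \sum_(T : TT) cT T * monoT T x.
Proof.
rewrite /Hv; under eq_bigr do rewrite mulr_suml.
rewrite exchange_big /=; apply: eq_bigr => T _.
have [-> | nz] := eqVneq (cT T) 0.
  by rewrite mul0r big1 // => G _; case: ifP; rewrite mul0r.
have [hA hB hk _ _] := cT_nz nz.
rewrite (bigD1 (phi T)) ?adm_phi //= eqxx mono_phi big1 ?addr0 // => G /andP [_ hG].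
by rewrite eq_sym (negPf hG) mul0r.
Qed.

Lemma Pval_eq (x : var N -> C) : Pval hh x = Pbr m1 m2 K f g x.
Proof. by rewrite E1 E3 E2. Qed.
Lemma cmb_eqU X i j (U1 U2 : 'I_s -> X) (V1 V2 : 'I_r -> X) :
  cmb i j U1 V1 = cmb i j U2 V2 -> forall i', i' != i -> U1 i' = U2 i'.
Proof.
move=> e i' ne; rewrite eq_sym in ne; have [a ha _] := unlift_some ne.
have hd : (a < d)%N by apply: (leq_trans (ltn_ord a)); move: rs3 r1; lia.
have := congr1 (fun F : {ffun 'I_d -> X} => F (Ordinal hd)) e; rewrite !cmbE /combN /= ltn_ord.
suff -> : insubd i (bump i a) = i' by [].
by apply: val_inj; rewrite ha /= val_insubd -[bump i a]/(val (lift i a)) ltn_ord.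
Qed.

Lemma cmb_eqV X i j (U1 U2 : 'I_s -> X) (V1 V2 : 'I_r -> X) :
  cmb i j U1 V1 = cmb i j U2 V2 -> forall j', j' != j -> V1 j' = V2 j'.
Proof.
move=> e j' ne; rewrite eq_sym in ne; have [a ha _] := unlift_some ne.
have hd : (s.-1 + a < d)%N by have := ltn_ord a; move: rs3 r1 s1; lia.
have := congr1 (fun F : {ffun 'I_d -> X} => F (Ordinal hd)) e; rewrite !cmbE /combN /= ltnNge leq_addr /= addKn.
suff -> : insubd j (bump j a) = j' by [].
by apply: val_inj; rewrite ha /= val_insubd -[bump j a]/(val (lift j a)) ltn_ord.
Qed.
Lemma FI_eq n (a b : FI N n) : aSg a = aSg b -> aT a = aT b -> aK a = aK b -> aL a = aL b ->
  aQ a = aQ b -> a = b.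
Proof.
by case: a b => [[[[? ?] ?] ?] ?] [[[[? ?] ?] ?] ?]; rewrite /aSg /aT /aK /aL /aQ /= => -> -> -> -> ->.
Qed.

Lemma nv_inj n : injective (@nv n).
Proof. by move=> q1 q2 /addIr [] /val_inj. Qed.

Lemma sgn_inj b (x y : int) : sgn b * x = sgn b * y -> x = y.
Proof. by case: b; rewrite ?mul1r ?mulN1r // => /eqP; rewrite eqr_opp => /eqP. Qed.

Lemma k_at n (A1 A2 : FI N n) i : admI A1 -> admI A2 -> aT A1 = aT A2 ->
  nv (aQ A1) = nv (aQ A2) -> (forall i', i' != i -> aK A1 i' = aK A2 i') ->
  aK A1 i = aK A2 i.
Proof.
move=> /andP [_ /eqP h1] /andP [_ /eqP h2] et en ek.
rewrite (tdot_split _ _ i) in h1; rewrite (tdot_split _ _ i) in h2.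
have es : \sum_(i' < n | i' != i) sgn (aT A1 i') * kval (aK A1 i') =
          \sum_(i' < n | i' != i) sgn (aT A2 i') * kval (aK A2 i').
  by apply: eq_bigr => i' ne; rewrite et ek.
apply: kval_inj; apply: (@sgn_inj (aT A1 i)); apply: (addIr (\sum_(i' < n | i' != i) sgn (aT A1 i') * kval (aK A1 i'))).
by rewrite h1 es et h2 en.
Qed.

Lemma recon T1 T2 :
  cT T1 != 0 -> cT T2 != 0 -> phi T1 = phi T2 ->
  tI T1 = tI T2 -> tJ T1 = tJ T2 ->
  aSg (tA T1) (tI T1) = aSg (tA T2) (tI T2) ->
  aT (tA T1) (tI T1) = aT (tA T2) (tI T2) ->
  aT (tB T1) (tJ T1) = aT (tB T2) (tJ T2) ->
  aL (tA T1) (tI T1) = aL (tA T2) (tI T2) ->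
  eps T1 = eps T2 ->
  nv (aQ (tA T1)) = nv (aQ (tA T2)) -> nv (aQ (tB T1)) = nv (aQ (tB T2)) ->
  T1 = T2.
Proof.
move=> nz1 nz2 eph ei ej esgi eti etj eli ee ena enb.
have [hA1 hB1 hk1 hl1 hs1] := cT_nz nz1.
have [hA2 hB2 hk2 hl2 hs2] := cT_nz nz2.
move: eph; rewrite /phi -ei -ej => -[esg et ek el _].
have etA : aT (tA T1) = aT (tA T2).
  apply/ffunP => i0; have [-> | ne] := eqVneq i0 (tI T1); first by rewrite eti ei.
  have := cmb_eqU et ne; rewrite /tauU eti -ee.
  by case: (aT (tA T1) i0); case: (aT (tA T2) i0); case: (aT (tA T2) (tI T2)); case: (eps T1).
have etB : aT (tB T1) = aT (tB T2).
  apply/ffunP => j0; have [-> | ne] := eqVneq j0 (tJ T1); first by rewrite etj ej.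
  have := cmb_eqV et ne; rewrite /tauV etj -ee.
  by case: (aT (tB T1) j0); case: (aT (tB T2) j0); case: (aT (tB T2) (tJ T2)); case: (eps T1).
have ekA : aK (tA T1) = aK (tA T2).
  have ho : forall i', i' != tI T1 -> aK (tA T1) i' = aK (tA T2) i' by move=> i' ne; apply: cmb_eqU ek i' ne.
  apply/ffunP => i0; have [-> | ne] := eqVneq i0 (tI T1); last exact: ho.
  exact: k_at hA1 hA2 etA ena ho.
have ekB : aK (tB T1) = aK (tB T2).
  apply/ffunP => j0; have [-> | ne] := eqVneq j0 (tJ T1); last exact: cmb_eqV ek j0 ne.
  by rewrite -hk1 ekA ei hk2 ej.
have eA : tA T1 = tA T2.
  apply: FI_eq => //; last exact: nv_inj.
    apply/ffunP => i0; have [-> | ne] := eqVneq i0 (tI T1); last exact: cmb_eqU esg i0 ne.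
    by rewrite esgi ei.
  apply/ffunP => i0; have [-> | ne] := eqVneq i0 (tI T1); last exact: cmb_eqU el i0 ne.
  by rewrite eli ei.
have eB : tB T1 = tB T2.
  apply: FI_eq => //; last exact: nv_inj.
    apply/ffunP => j0; have [-> | ne] := eqVneq j0 (tJ T1); last exact: cmb_eqV esg j0 ne.
    move: hs1 hs2; rewrite esgi ej.
    by case: (aSg (tB T1) (tJ T2)); case: (aSg (tB T2) (tJ T2)); case: (aSg (tA T2) (tI T2)).
  apply/ffunP => j0; have [-> | ne] := eqVneq j0 (tJ T1); last exact: cmb_eqV el j0 ne.
  by rewrite -hl1 eli hl2 ej.
move: T1 T2 eA eB ei ej {nz1 nz2 hA1 hB1 hk1 hl1 hs1 hA2 hB2 hk2 hl2 hs2 esg et ek el esgi eti etj eli ee ena enb etA etB ekA ekB}.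
by move=> [[? ?] [? ?]] [[? ?] [? ?]]; rewrite /tA /tB /tI /tJ /= => -> -> -> ->.
Qed.
Lemma kv0 n (A : FI N n) i : (n == 1)%N -> admI A -> kval (aK A i) = 0.
Proof.
move=> /eqP en /andP [hr /eqP ht]; rewrite (tdot_split _ _ i) in ht.
rewrite big_pred0 ?addr0 in ht; last first.
  move=> i'; apply/negbTE; rewrite negbK; apply/eqP/ord_inj.
  by have := ltn_ord i'; have := ltn_ord i; lia.
move: hr; rewrite /nrange => hr.
have h0 : nv (aQ A) = 0 by lia.
by move: ht; rewrite h0 mul0r; case: (aT A i); rewrite ?mul1r ?mulN1r // => /eqP; rewrite oppr_eq0 => /eqP.
Qed.

Lemma l_true T : cT T != 0 -> ((s == 1)%N || (r == 1)%N) -> aL (tA T) (tI T) = true.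
Proof.
move=> nz h1; have [hA hB hk hl hsg] := cT_nz nz.
have hkv : kval (aK (tA T) (tI T)) = 0.
  case/orP: h1 => h1; first exact: kv0 h1 hA.
  by rewrite hk; exact: kv0 h1 hB.
case hl0 : (aL (tA T) (tI T)) => //; move: nz.
rewrite /cT hA hB /= /pb /mOf /monoOf /= hk hl !eqxx /= -hk hkv -hl hl0 omega0m //.
by rewrite mulr0 oppr0 !if_same mulr0 eqxx.
Qed.
Lemma nn_eq T1 T2 : cT T1 != 0 -> cT T2 != 0 -> phi T1 = phi T2 -> nn T1 = nn T2.
Proof.
move=> nz1 nz2 e; have [hA1 hB1 hk1 _ _] := cT_nz nz1; have [hA2 hB2 hk2 _ _] := cT_nz nz2.
by rewrite -nv_phi // -[RHS]nv_phi // e.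
Qed.

Lemma nrangeI n (A : FI N n) : admI A -> - (n%:Z) <= nv (aQ A) *+ 2 <= n%:Z - 1.
Proof. by case/andP. Qed.

Lemma key1_aux T1 T2 : cT T1 != 0 -> cT T2 != 0 -> phi T1 = phi T2 ->
  aT (tA T1) (tI T1) = aT (tA T2) (tI T2) ->
  aT (tB T1) (tJ T1) = aT (tB T2) (tJ T2) ->
  nv (aQ (tA T1)) = nv (aQ (tA T2)) ->
  (if (s == 1)%N || (r == 1)%N then eps T1 = eps T2 else aL (tA T1) (tI T1) = aL (tA T2) (tI T2)) ->
  [/\ eps T1 = eps T2, nv (aQ (tB T1)) = nv (aQ (tB T2)) & aL (tA T1) (tI T1) = aL (tA T2) (tI T2)].
Proof.
move=> nz1 nz2 e eti etj ena hb.
have enn := nn_eq nz1 nz2 e.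
have [hA1 hB1 _ _ _] := cT_nz nz1; have [hA2 hB2 _ _ _] := cT_nz nz2.
rewrite /nn /eps /std eti etj ena in enn.
have ee : eps T1 = eps T2.
  case: ifP hb => // h1 hl; rewrite /eps /std eti etj ena.
  have hs2 : (2 <= s)%N by move: h1 s1; case: (s) => [|[|]] //.
  apply: (arith_eps (R := r%:Z) (S := s%:Z)) enn.
  - by rewrite -subzn ?PoszD //; apply: ltnW.
  - by rewrite lez_nat.
  - exact: nrangeI.
  - exact: nrangeI.
split; first exact: ee.
  have ee' := ee; rewrite /eps /std eti etj ena in ee'.
  by rewrite ee' in enn; exact: arith_n enn.
move: hb; case: ifP => // h1 _.
by rewrite !l_true.
Qed.

Lemma key2_aux T1 T2 : cT T1 != 0 -> cT T2 != 0 -> phi T1 = phi T2 ->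
  aT (tA T1) (tI T1) = aT (tA T2) (tI T2) ->
  aT (tB T1) (tJ T1) = aT (tB T2) (tJ T2) ->
  nv (aQ (tB T1)) = nv (aQ (tB T2)) ->
  (if (s == 1)%N || (r == 1)%N then eps T1 = eps T2 else aL (tA T1) (tI T1) = aL (tA T2) (tI T2)) ->
  [/\ eps T1 = eps T2, nv (aQ (tA T1)) = nv (aQ (tA T2)) & aL (tA T1) (tI T1) = aL (tA T2) (tI T2)].
Proof.
move=> nz1 nz2 e eti etj enb hb.
have enn := nn_eq nz1 nz2 e.
have [hA1 hB1 _ _ _] := cT_nz nz1; have [hA2 hB2 _ _ _] := cT_nz nz2.
rewrite /nn /eps /std eti etj enb in enn.
have ee : eps T1 = eps T2.
  case: ifP hb => // h1 hl; rewrite /eps /std eti etj enb.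
  have hr2 : (2 <= r)%N by move: h1 r1; rewrite orbC; case: (r) => [|[|]] //.
  apply: (arith_eps2 (R := r%:Z) (S := s%:Z)) enn.
  - by rewrite -subzn ?PoszD //; apply: ltnW.
  - by rewrite lez_nat.
  - exact: nrangeI.
  - exact: nrangeI.
split; first exact: ee.
  have ee' := ee; rewrite /eps /std eti etj enb in ee'.
  by rewrite ee' in enn; exact: arith_n2 enn.
move: hb; case: ifP => // h1 _.
by rewrite !l_true.
Qed.
Definition b4 T := if (s == 1)%N || (r == 1)%N then eps T else aL (tA T) (tI T).
Definition posS T : 'I_s := insubd (tI T) (absz (nv (aQ (tA T)) + (s./2)%:Z)).
Definition posR T : 'I_r := insubd (tJ T) (absz (nv (aQ (tB T)) + (r./2)%:Z)).
Definition key1 T := (tI T, tJ T, aSg (tA T) (tI T), b4 T, aT (tA T) (tI T), aT (tB T) (tJ T), posS T).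
Definition key2 T := (tI T, tJ T, aSg (tA T) (tI T), b4 T, aT (tA T) (tI T), aT (tB T) (tJ T), posR T).

Lemma pos_inj n (A1 A2 : FI N n) (i1 i2 : 'I_n) : admI A1 -> admI A2 ->
  insubd i1 (absz (nv (aQ A1) + (n./2)%:Z)) = insubd i2 (absz (nv (aQ A2) + (n./2)%:Z)) :> 'I_n ->
  nv (aQ A1) = nv (aQ A2).
Proof.
move=> /nrangeI /andP [a1 a2] /nrangeI /andP [b1 b2] /(congr1 val).
have hh2 := odd_double_half n.
have e2 : (n./2)%:Z *+ 2 = n%:Z - (odd n)%:Z.
  by rewrite -[n in RHS]hh2 PoszD -muln2 PoszM; lia.
have ho : (0 <= (odd n)%:Z <= 1)%R by case: (odd n).
move/andP: ho => [o1 o2].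
have g1 : 0 <= nv (aQ A1) + (n./2)%:Z by lia.
have g2 : 0 <= nv (aQ A2) + (n./2)%:Z by lia.
have p1 : (absz (nv (aQ A1) + (n./2)%:Z)%R < n)%N by rewrite -ltz_nat gez0_abs //; lia.
have p2 : (absz (nv (aQ A2) + (n./2)%:Z)%R < n)%N by rewrite -ltz_nat gez0_abs //; lia.
rewrite !val_insubd p1 p2 => /(congr1 (fun m : nat => m%:Z)).
by rewrite !gez0_abs //; lia.
Qed.
Definition Aset G := [set T | (phi T == G) && (cT T != 0)].

Lemma key1_inj G : {in Aset G &, injective key1}.
Proof.
move=> T1 T2; rewrite !inE => /andP [/eqP p1 nz1] /andP [/eqP p2 nz2] e.
have ep : phi T1 = phi T2 by rewrite p1 p2.
move: e; rewrite /key1 => -[ei ej esg eb4 eti etj epos].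
have [hA1 hB1 _ _ _] := cT_nz nz1; have [hA2 hB2 _ _ _] := cT_nz nz2.
have ena := pos_inj hA1 hA2 epos.
have hb : if (s == 1)%N || (r == 1)%N then eps T1 = eps T2 else aL (tA T1) (tI T1) = aL (tA T2) (tI T2).
  by move: eb4; rewrite /b4; case: ifP.
have [ee enb el] := key1_aux nz1 nz2 ep eti etj ena hb.
exact: recon nz1 nz2 ep ei ej esg eti etj el ee ena enb.
Qed.

Lemma key2_inj G : {in Aset G &, injective key2}.
Proof.
move=> T1 T2; rewrite !inE => /andP [/eqP p1 nz1] /andP [/eqP p2 nz2] e.
have ep : phi T1 = phi T2 by rewrite p1 p2.
move: e; rewrite /key2 => -[ei ej esg eb4 eti etj epos].
have [hA1 hB1 _ _ _] := cT_nz nz1; have [hA2 hB2 _ _ _] := cT_nz nz2.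
have enb := pos_inj hB1 hB2 epos.
have hb : if (s == 1)%N || (r == 1)%N then eps T1 = eps T2 else aL (tA T1) (tI T1) = aL (tA T2) (tI T2).
  by move: eb4; rewrite /b4; case: ifP.
have [ee ena el] := key2_aux nz1 nz2 ep eti etj enb hb.
exact: recon nz1 nz2 ep ei ej esg eti etj el ee ena enb.
Qed.

Lemma card_A G : (#|Aset G| <= 16 * r * s * minn r s)%N.
Proof.
have c1 := @leq_card_in _ _ key1 _ (key1_inj (G := G)); have c2 := @leq_card_in _ _ key2 _ (key2_inj (G := G)).
rewrite !card_prod !card_ord card_bool in c1 c2.
case: (leqP r s) => h.
  by apply: (leq_trans c2); lia.
by apply: (leq_trans c1); lia.
Qed.
Local Notation M := (Omega m1 m2 K * pnorm N f * pnorm N g).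

Lemma M_ge0 : 0 <= M.
Proof.
by apply: mulr_ge0; [apply: mulr_ge0; [exact: Omega_ge0 | exact: pnorm_ge0] | exact: pnorm_ge0].
Qed.

Lemma cT_bnd T : `|cT T| <= M.
Proof.
rewrite /cT; case: ifP => [/andP [hA hB] | _]; last by rewrite normr0 M_ge0.
rewrite !normrM.
apply: (@le_trans _ _ (pnorm N f * pnorm N g * Omega m1 m2 K)); last by rewrite mulrC mulrA.
apply: ler_pM; rewrite ?normr_ge0 ?mulr_ge0 //; last exact: (pb_bnd N0 m2p m12 Kp).
by apply: ler_pM; rewrite ?normr_ge0 //; apply: fval_le.
Qed.

Lemma Hv_bnd G : `|Hv G| <= (#|Aset G|)%:R * M.
Proof.
rewrite /Hv; apply: (le_trans (ler_norm_sum _ _ _)).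
apply: (@le_trans _ _ (\sum_(T : TT) (if T \in Aset G then M else 0))).
  apply: ler_sum => T _; rewrite inE; case: eqP => _ /=; last by rewrite normr0.
  have [-> | nz] := eqVneq (cT T) 0; first by rewrite normr0 /=.
  by rewrite /= cT_bnd.
by rewrite -big_mkcond sumr_const mulr_natl.
Qed.

Lemma main_bound : pnorm N hh <= 2 ^+ 4 * Omega m1 m2 K * r%:R * s%:R * (minn r s)%:R * pnorm N f * pnorm N g.
Proof.
have e : 2 ^+ 4 * Omega m1 m2 K * r%:R * s%:R * (minn r s)%:R * pnorm N f * pnorm N g =
  (16 * r * s * minn r s)%N%:R * M by rewrite !natrM; ring.
rewrite e; apply: pnorm_le.
  by apply: mulr_ge0; [exact: ler0n | exact: M_ge0].
move=> G _; rewrite /fval hh_kpt.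
have -> : ((((aSg G, aT G), aK G), aL G), aQ G) = G by case: G => [[[[? ?] ?] ?] ?].
apply: (le_trans (Hv_bnd G)); apply: ler_wpM2r; first exact: M_ge0.
by rewrite ler_nat card_A.
Qed.

Lemma lemma1_sec : exists h : coefT C d,
    is_coef h /\
    (forall x : var N -> C, Pval h x = Pbr m1 m2 K f g x) /\
    pnorm N h <= 2 ^+ 4 * Omega m1 m2 K * r%:R * s%:R * (minn r s)%:R
                 * pnorm N f * pnorm N g.
Proof.
exists hh; split; first exact: hh_coef.
by split; [exact: Pval_eq | exact: main_bound].
Qed.
End Main.

Unset Implicit Arguments.
Theorem lemma1 (C : numClosedFieldType) (N : nat) (m1 m2 K : C) (r s : nat)
    (f : coefT C s) (g : coefT C r) :
  (0 < N)%N -> 0 < m2 -> m2 < m1 -> 0 < K ->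
  (1 <= s)%N -> (1 <= r)%N -> (3 <= r + s)%N ->
  is_coef f -> is_coef g ->
  exists h : coefT C (r + s - 2),
    is_coef h /\
    (forall x : var N -> C, Pval h x = Pbr m1 m2 K f g x) /\
    pnorm N h <= 2 ^+ 4 * Omega m1 m2 K * r%:R * s%:R * (minn r s)%:R
                 * pnorm N f * pnorm N g.
Proof.
move=> N0 m2p m12 Kp s1 r1 rs3 _ _.
exact: lemma1_sec.
Qed.
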